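(* Let $\varepsilon>0$, let $R_1,\dots,R_n:[d]\to\mathcal Y$ be $\varepsilon$-private randomizers with $\mathcal Y$ finite and $d$ even, let $|\vec R|_{\neq}$ be the number of distinct randomizers among them, and suppose $d>4(e^{2\varepsilon}-1)^2\ln(12|\mathcal Y|\cdot|\vec R|_{\neq})$. If $H$ is chosen uniformly at random among subsets of $[d]$ of size $d/2$, then with probability at least $2/3$ over $H$, every randomizer $Q_{H,R_i}$, $i\in[n]$, is $\varepsilon'$-private, where \[ \varepsilon'=(e^{2\varepsilon}-1)\sqrt{\frac{16}{d}\ln\left(12|\mathcal Y|\cdot|\vec R|_{\neq}\right)} . \]
   Context: A randomizer $R:\mathcal X\to\mathcal Y$ is $\varepsilon$-private if for all $x,x'\in\mathcal X$ and all $Y\subseteq\mathcal Y$, $\Pr[R(x)\in Y]\le e^{\varepsilon}\Pr[R(x')\in Y]$. $\mathbf U_H$ is the uniform distribution on $H\subseteq[d]$, $\overline H=[d]\setminus H$, and $R(\mathbf U_H)$ is the distribution of $R(\hat x)$ with $\hat x\sim\mathbf U_H$. For $H\subset[d]$ with $|H|=d/2$ and a randomizer $R:[d]\to\mathcal Y$, $Q_{H,R}:\{\pm1\}\to\mathcal Y$ is the randomizer that on input $+1$ outputs a sample of $R(\mathbf U_H)$ and on input $-1$ outputs a sample of $R(\mathbf U_{\overline H})$. *)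

(* Defs.v *)
From HB Require Import structures.
From mathcomp Require Import all_boot.
From Stdlib Require Import Reals.
Set Implicit Arguments. Unset Strict Implicit. Unset Printing Implicit Defensive.

Lemma Rplus_assoc' : associative Rplus.
Proof. by move=> a b c; rewrite Rplus_assoc. Qed.
HB.instance Definition _ := Monoid.isComLaw.Build R 0%R Rplus Rplus_assoc' Rplus_comm Rplus_0_l.

Notation "\rsum_ ( i 'in' A ) F" := (\big[Rplus/0%R]_(i in A) F)
  (at level 41, F at level 41, i, A at level 50).
Notation "\rsum_ ( i : T ) F" := (\big[Rplus/0%R]_(i : T) F)
  (at level 41, F at level 41, i at level 50).

(* A randomizer X -> Y (Y finite) is given by its output distribution:
   rz x y = Pr[R(x) = y]. *)
Definition randomizer (X Y : finType) := X -> Y -> R.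

Definition is_randomizer (X Y : finType) (rz : randomizer X Y) : Prop :=
  (forall x y, (0 <= rz x y)%R) /\ (forall x, \rsum_(y : Y) rz x y = 1%R).

Definition prob (Y : finType) (p : Y -> R) (S : {set Y}) : R := \rsum_(y in S) p y.

Definition is_private (X Y : finType) (eps : R) (rz : randomizer X Y) : Prop :=
  forall (x x' : X) (S : {set Y}), (prob (rz x) S <= exp eps * prob (rz x') S)%R.

(* Distribution of R(U_H), U_H uniform on H subset of [d] = 'I_d. *)
Definition unif_out (d : nat) (Y : finType) (rz : randomizer 'I_d Y) (H : {set 'I_d}) : Y -> R :=
  fun y => (\rsum_(x in H) rz x y / INR #|H|)%R.

(* Q_{H,R} : {+1,-1} -> Y; the input +1 is encoded as [true], -1 as [false]. *)
Definition Q (d : nat) (Y : finType) (H : {set 'I_d}) (rz : randomizer 'I_d Y) : randomizer bool Y :=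
  fun b => if b then unif_out rz H else unif_out rz (~: H).

(* k is the number of distinct randomizers among Rs 0, ..., Rs (n-1):
   the classes of "Rs i = Rs j" are exactly indexed by 'I_k. *)
Definition num_distinct (n : nat) (T : Type) (Rs : 'I_n -> T) (k : nat) : Prop :=
  exists g : 'I_n -> 'I_k,
    (forall j : 'I_k, exists i, g i = j) /\ (forall i i', g i = g i' <-> Rs i = Rs i').

(* Main.v *)
Require Import Defs.
From HB Require Import structures.
From mathcomp Require Import all_boot.
From Stdlib Require Import Reals Lra.
From Stdlib Require Import Ranalysis MVT Lia.

Open Scope R_scope.

Lemma sinh_pos x : 0 < x -> 0 < sinh x.
Proof. intro Hx. unfold sinh. assert (exp (-x) < exp x) by (apply exp_increasing; lra). lra. Qed.

Lemma sinh_neg x : x < 0 -> sinh x < 0.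
Proof. intro Hx. unfold sinh. assert (exp x < exp (-x)) by (apply exp_increasing; lra). lra. Qed.

Definition mfun x := x * cosh x - sinh x.

Lemma mfun_deriv x : derivable_pt_lim mfun x (x * sinh x).
Proof.
  unfold mfun.
  replace (x * sinh x) with ((1 * cosh x + x * sinh x) - cosh x) by ring.
  apply derivable_pt_lim_minus; [|apply derivable_pt_lim_sinh].
  apply (derivable_pt_lim_mult id cosh); [apply derivable_pt_lim_id|apply derivable_pt_lim_cosh].
Qed.

Lemma mfun_pos x : 0 <= x -> 0 <= mfun x.
Proof.
  intro Hx. destruct (Req_dec x 0) as [->|Hx0].
  - unfold mfun, sinh, cosh. rewrite Ropp_0. lra.
  - pose (pr := fun y => exist (fun l => derivable_pt_abs mfun y l) _ (mfun_deriv y) : derivable_pt mfun y).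
    destruct (MVT_cor1 mfun 0 x pr) as [c [Hc1 Hc2]]; [lra|].
    rewrite (derive_pt_eq_0 _ _ _ _ (mfun_deriv c)) in Hc1.
    assert (mfun 0 = 0) by (unfold mfun, sinh, cosh; rewrite Ropp_0; lra).
    assert (0 < sinh c) by (apply sinh_pos; lra).
    assert (0 <= c * sinh c * (x - 0)) by (apply Rmult_le_pos; [apply Rmult_le_pos|]; lra).
    lra.
Qed.

Definition kfun x := cosh x * exp (- (x * x / 2)).

Lemma kfun_deriv x : derivable_pt_lim kfun x (- (mfun x) * exp (- (x * x / 2))).
Proof.
  unfold kfun.
  replace (- (mfun x) * exp (- (x * x / 2))) with
    (sinh x * exp (- (x * x / 2)) + cosh x * (exp (- (x * x / 2)) * (- ((1 * x + x * 1)/2)))) by (unfold mfun; field).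
  apply (derivable_pt_lim_mult cosh (fun x => exp (- (x * x / 2)))); [apply derivable_pt_lim_cosh|].
  apply (derivable_pt_lim_comp (fun x => - (x * x / 2)) exp); [|apply derivable_pt_lim_exp].
  apply (derivable_pt_lim_opp (fun x => x * x / 2)).
  replace ((1 * x + x * 1) / 2) with ((1 * x + x * 1) * / 2) by field. apply (derivable_pt_lim_scal_right (fun x => x * x)).
  apply (derivable_pt_lim_mult id id); apply derivable_pt_lim_id.
Qed.

Lemma kfun_le1_pos x : 0 <= x -> kfun x <= 1.
Proof.
  intro Hx. destruct (Req_dec x 0) as [->|Hx0].
  - unfold kfun, cosh. rewrite Ropp_0. replace (- (0 * 0 / 2)) with 0 by field. rewrite exp_0. lra.
  - pose (pr := fun y => exist (fun l => derivable_pt_abs kfun y l) _ (kfun_deriv y) : derivable_pt kfun y).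
    destruct (MVT_cor1 kfun 0 x pr) as [c [Hc1 Hc2]]; [lra|].
    rewrite (derive_pt_eq_0 _ _ _ _ (kfun_deriv c)) in Hc1.
    assert (kfun 0 = 1) by (unfold kfun, cosh; rewrite Ropp_0; replace (- (0 * 0 / 2)) with 0 by field; rewrite exp_0; lra).
    assert (0 <= mfun c) by (apply mfun_pos; lra).
    assert (0 < exp (- (c * c / 2))) by apply exp_pos.
    assert (0 <= mfun c * exp (- (c * c / 2)) * (x - 0)) by (apply Rmult_le_pos; [apply Rmult_le_pos|]; lra).
    lra.
Qed.

Lemma cosh_bound x : exp x + exp (- x) <= 2 * exp (x * x / 2).
Proof.
  assert (H : forall y, 0 <= y -> exp y + exp (- y) <= 2 * exp (y * y / 2)).
  { intros y Hy. pose proof (kfun_le1_pos y Hy) as Hk. unfold kfun, cosh in Hk.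
    rewrite (exp_Ropp (y*y/2)) in Hk. pose proof (exp_pos (y*y/2)).
    apply Rmult_le_compat_r with (r := 2 * exp (y * y / 2)) in Hk; [|lra].
    replace ((exp y + exp (- y)) / 2 * / exp (y * y / 2) * (2 * exp (y * y / 2))) with (exp y + exp (- y)) in Hk by (field; lra).
    lra. }
  destruct (Rle_dec 0 x). apply H; auto.
  replace (x * x) with ((-x) * (-x)) by ring. rewrite Rplus_comm.
  pattern x at 2; replace x with (- - x) by ring. apply H. lra.
Qed.

Lemma Rmult_assoc' : associative Rmult.
Proof. by move=> a b c; rewrite Rmult_assoc. Qed.
HB.instance Definition _ := Monoid.isComLaw.Build R 1%R Rmult Rmult_assoc' Rmult_comm Rmult_1_l.
HB.instance Definition _ := Monoid.isMulLaw.Build R 0%R Rmult Rmult_0_l Rmult_0_r.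
HB.instance Definition _ := Monoid.isAddLaw.Build R Rmult Rplus Rmult_plus_distr_r Rmult_plus_distr_l.

Lemma rprod_const (D : nat) (c : R) : \big[Rmult/1]_(i < D) c = c ^ D.
Proof. rewrite big_const_ord. elim: D => //= D ->. done. Qed.

Section RB.
Variable I : Type.
Lemma rsum_le (r : seq I) (P : pred I) (F G : I -> R) :
  (forall i, P i -> F i <= G i) ->
  \big[Rplus/0]_(i <- r | P i) F i <= \big[Rplus/0]_(i <- r | P i) G i.
Proof. move=> H; apply: (big_ind2 (fun x y => x <= y)) => //; [lra|]. move=> *; lra. Qed.
Lemma rsum_ge0 (r : seq I) (P : pred I) (F : I -> R) :
  (forall i, P i -> 0 <= F i) -> 0 <= \big[Rplus/0]_(i <- r | P i) F i.
Proof. move=> H; apply: (big_ind (fun x => 0 <= x)) => //; [lra|]. move=> *; lra. Qed.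
Lemma rprod_le (r : seq I) (P : pred I) (F G : I -> R) :
  (forall i, P i -> 0 <= F i <= G i) ->
  \big[Rmult/1]_(i <- r | P i) F i <= \big[Rmult/1]_(i <- r | P i) G i.
Proof.
  move=> H.
  suff: 0 <= \big[Rmult/1]_(i <- r | P i) F i <= \big[Rmult/1]_(i <- r | P i) G i by case.
  apply: (big_ind2 (fun x y => 0 <= x <= y)) => //; [lra|].
  move=> x1 x2 y1 y2 [? ?] [? ?]; split; [apply Rmult_le_pos; lra|].
  apply Rmult_le_compat; lra.
Qed.
Lemma rsum_scale (r : seq I) (P : pred I) (F : I -> R) k :
  k * \big[Rplus/0]_(i <- r | P i) F i = \big[Rplus/0]_(i <- r | P i) (k * F i).
Proof. apply: (big_morph (fun x => k * x)); [move=> x y; ring|ring]. Qed.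
Lemma exp_rsum (r : seq I) (P : pred I) (F : I -> R) :
  exp (\big[Rplus/0]_(i <- r | P i) F i) = \big[Rmult/1]_(i <- r | P i) exp (F i).
Proof. apply: (big_morph exp); [exact: exp_plus|exact: exp_0]. Qed.
Lemma rsum_split (r : seq I) (P : pred I) (F G : I -> R) :
  \big[Rplus/0]_(i <- r | P i) (F i + G i) = \big[Rplus/0]_(i <- r | P i) F i + \big[Rplus/0]_(i <- r | P i) G i.
Proof. exact: big_split. Qed.
End RB.

Lemma INR_card (T : finType) (A : {pred T}) : INR #|A| = \rsum_(i in A) 1.
Proof.
  rewrite -sum1_card. apply: (big_morph INR); [|done].
  move=> x y; exact: plus_INR.
Qed.

Lemma rsum_sub (T : finType) (A : {pred T}) (F : T -> R) :
  (forall i, 0 <= F i) -> \rsum_(i in A) F i <= \rsum_(i : T) F i.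
Proof.
  move=> H. rewrite [X in X <= _]big_mkcond. apply: rsum_le => i _.
  case: (i \in A); [lra|apply H].
Qed.

Definition Rltb (x y : R) : bool := if Rlt_dec x y then true else false.
Lemma RltbP x y : reflect (x < y) (Rltb x y).
Proof. rewrite /Rltb; case: Rlt_dec => H; constructor => //. Qed.

Lemma markov_count (T : finType) (Z : T -> R) (t lam : R) : 0 <= lam ->
  INR #|[set s | Rltb t (Z s)]| * exp (lam * t) <= \rsum_(s : T) exp (lam * Z s).
Proof.
  move=> Hl. rewrite INR_card Rmult_comm rsum_scale.
  apply: (Rle_trans _ (\rsum_(s in [set s | Rltb t (Z s)]) exp (lam * Z s))); last first.
    apply: rsum_sub => s; apply: Rlt_le; apply exp_pos.
  apply: rsum_le => s; rewrite inE => /RltbP Hs. rewrite Rmult_1_r.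
  destruct (Req_dec lam 0) as [->|Hl0]. rewrite !Rmult_0_l; lra.
  apply: Rlt_le; apply: exp_increasing. apply Rmult_lt_compat_l; lra.
Qed.

Lemma rsum_const (D : nat) (c : R) : \big[Rplus/0]_(i < D) c = INR D * c.
Proof. rewrite big_const_ord. elim: D => [|D IH]; first by simpl; ring.
  rewrite S_INR -[iter D.+1 _ _]/(c + iter D (Rplus c) 0) IH; ring. Qed.

Lemma sq_le_abs x A : Rabs x <= A -> x * x <= A * A.
Proof.
  move=> H. case: (Rle_dec 0 x) => h.
  - rewrite Rabs_right in H; [nra|lra].
  - rewrite Rabs_left in H; [nra|lra].
Qed.

Lemma chernoff1 (D : nat) (a : 'I_D -> R) (A t : R) : 0 < A -> (forall i, Rabs (a i) <= A) -> 0 <= t -> (0 < D)%nat ->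
  INR #|[set s : {ffun 'I_D -> bool} | Rltb t (\rsum_(i : 'I_D) (if s i then a i else - a i))]|
   <= 2 ^ D * exp (- (t * t / (2 * INR D * (A * A)))).
Proof.
  move=> HA Ha Ht HD.
  have HDr : 0 < INR D by apply: lt_0_INR; apply/ltP.
  set lam := t / (INR D * (A * A)).
  have HDA : 0 < INR D * (A * A) by apply: Rmult_lt_0_compat; [lra|apply: Rmult_lt_0_compat; lra].
  have Hl : 0 <= lam by rewrite /lam /Rdiv; apply: Rmult_le_pos; [lra|apply: Rlt_le; apply: Rinv_0_lt_compat; exact HDA].
  have M := @markov_count _ (fun s : {ffun 'I_D -> bool} => \rsum_(i : 'I_D) (if s i then a i else - a i)) t lam Hl.
  have E1 : \rsum_(s : {ffun 'I_D -> bool}) exp (lam * \rsum_(i : 'I_D) (if s i then a i else - a i))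
     = \big[Rmult/1]_(i : 'I_D) (\rsum_(b : bool) exp (lam * (if b then a i else - a i))).
  { rewrite (@bigA_distr_bigA _ _ _ Rmult Rplus). apply: eq_bigr => s _.
    rewrite rsum_scale exp_rsum. done. }
  have E2 : \big[Rmult/1]_(i : 'I_D) (\rsum_(b : bool) exp (lam * (if b then a i else - a i)))
     <= \big[Rmult/1]_(i : 'I_D) (2 * exp (lam * lam * (A * A) / 2)).
  { apply: rprod_le => i _. rewrite big_bool /=. split.
    - apply: Rlt_le; apply: Rplus_lt_0_compat; apply: exp_pos.
    - apply: Rle_trans. replace (lam * - a i) with (- (lam * a i)) by ring. apply: cosh_bound.
      apply: Rmult_le_compat_l; [lra|].
      have hs := sq_le_abs _ _ (Ha i).
      destruct (Req_dec (lam * a i * (lam * a i) / 2) (lam * lam * (A * A) / 2)) as [->|hne]; [lra|].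
      apply: Rlt_le; apply: exp_increasing. have : 0 <= lam * lam by nra. nra. }
  have E3 : \big[Rmult/1]_(i : 'I_D) (2 * exp (lam * lam * (A * A) / 2))
     = 2 ^ D * exp (INR D * (lam * lam * (A * A) / 2)).
  { rewrite big_split /= rprod_const -rsum_const exp_rsum. done. }
  rewrite E1 in M. have M2 := Rle_trans _ _ _ M E2.
  rewrite E3 in M2.
  set N := INR _ in M M2 *.
  have -> : N = N * exp (lam * t) * exp (- (lam * t)) by rewrite Rmult_assoc -exp_plus Rplus_opp_r exp_0 Rmult_1_r.
  apply: Rle_trans. apply: Rmult_le_compat_r; [apply: Rlt_le; apply: exp_pos|exact: M2].
  rewrite Rmult_assoc -exp_plus. right. congr (_ * exp _).
  rewrite /lam. field. split; [lra|nra].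
Qed.

Definition phi (D d : nat) (e : {ffun 'I_D * bool -> 'I_d}) (s : {ffun 'I_D -> bool}) : {set 'I_d} :=
  (fun i => e (i, s i)) @: [set: 'I_D].
Definition tot (d : nat) (p : 'I_d -> R) := \rsum_(x : 'I_d) p x.
Arguments phi {D d}.
Arguments tot {d}.
Definition Zof (d : nat) (p : 'I_d -> R) (H : {set 'I_d}) := \rsum_(x in H) p x - \rsum_(x in ~: H) p x.
Arguments Zof {d}.
Definition badb (d : nat) (c : R) (p : 'I_d -> R) (H : {set 'I_d}) := Rltb (c * tot p) (Rabs (Zof p H)).
Arguments badb {d}.

Lemma tot_split d (p : 'I_d -> R) (H : {set 'I_d}) : tot p = \rsum_(x in H) p x + \rsum_(x in ~: H) p x.
Proof.
  rewrite /tot (bigID (fun x => x \in H)) /=. congr (_ + _); apply: eq_bigl => x; rewrite ?inE //.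
Qed.

Lemma sum_phi D d (e : {ffun 'I_D * bool -> 'I_d}) s (p : 'I_d -> R) : injective e ->
  \rsum_(x in phi e s) p x = \rsum_(i : 'I_D) p (e (i, s i)).
Proof.
  move=> He. rewrite /phi big_imset /=; last by move=> i j _ _ /He [].
  apply: eq_bigl => i; rewrite inE //.
Qed.

Lemma tot_e D d (e : {ffun 'I_D * bool -> 'I_d}) (p : 'I_d -> R) : injective e -> d = (D + D)%nat ->
  tot p = \rsum_(i : 'I_D) (p (e (i, true)) + p (e (i, false))).
Proof.
  move=> He Hd.
  have Himg : e @: [set: 'I_D * bool] = [set: 'I_d].
  { apply/eqP; rewrite eqEcard subsetT /= card_imset // !cardsT card_prod !card_ord card_bool Hd.
    by rewrite muln2 addnn. }
  have -> : tot p = \rsum_(x in [set: 'I_d]) p x by apply: eq_bigl => x; rewrite inE.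
  rewrite -Himg big_imset; last by move=> u v _ _ /He.
  have -> : \rsum_(u in [set: 'I_D * bool]) p (e u) = \rsum_(u : 'I_D * bool) p (e (u.1, u.2)).
    by apply: eq_big => [u|[i b] _]; rewrite ?inE.
  rewrite -(pair_big (fun _ => true) (fun _ => true) (fun i b => p (e (i, b)))) /=.
  apply: eq_bigr => i _. by rewrite big_bool.
Qed.

Lemma Zphi D d (e : {ffun 'I_D * bool -> 'I_d}) s (p : 'I_d -> R) : injective e -> d = (D + D)%nat ->
  Zof p (phi e s) = \rsum_(i : 'I_D) (if s i then p (e (i, true)) - p (e (i, false))
                                        else - (p (e (i, true)) - p (e (i, false)))).
Proof.
  move=> He Hd.
  have E1 := tot_split _ p (phi e s). rewrite (@tot_e D d e p He Hd) sum_phi // in E1.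
  rewrite /Zof sum_phi //.
  have E2 : \rsum_(i : 'I_D) (if s i then p (e (i, true)) - p (e (i, false))
                                        else - (p (e (i, true)) - p (e (i, false))))
     + \rsum_(i : 'I_D) (p (e (i, true)) + p (e (i, false)))
     = 2 * \rsum_(i : 'I_D) p (e (i, s i)).
  { rewrite rsum_scale -rsum_split. apply: eq_bigr => i _. case: (s i); ring. }
  lra.
Qed.

Lemma abs_gt_cases T z : T < Rabs z -> T < z \/ T < - z.
Proof. case: (Rle_dec 0 z) => h; [rewrite Rabs_right|rewrite Rabs_left]; lra. Qed.

Lemma rsum_nonneg_eq0 (T : finType) (A : {pred T}) (F : T -> R) :
  (forall x, 0 <= F x) -> \rsum_(x : T) F x = 0 -> \rsum_(x in A) F x = 0.
Proof.
  move=> H0 H. have := rsum_sub _ A _ H0. have : 0 <= \rsum_(x in A) F x by apply: rsum_ge0.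
  lra.
Qed.

Lemma rsum_const_ord (d : nat) (c : R) : \rsum_(x : 'I_d) c = INR d * c.
Proof. exact: rsum_const. Qed.

Lemma rsum_opp (I : Type) (r : seq I) (P : pred I) (F : I -> R) :
  - (\big[Rplus/0]_(i <- r | P i) F i) = \big[Rplus/0]_(i <- r | P i) (- F i).
Proof. apply: (big_morph Ropp); [move=> x y; ring|ring]. Qed.

Lemma count_bad_p D d (e : {ffun 'I_D * bool -> 'I_d}) (p : 'I_d -> R) eps t :
  d = (D + D)%nat -> injective e -> (forall x, 0 <= p x) ->
  (forall x x', p x <= exp eps * p x') -> 0 < eps -> 0 <= t ->
  INR #|[set s | badb ((exp (2 * eps) - 1) * sqrt (t / INR d)) p (phi e s)]| <= 2 * 2 ^ D * exp (- t).
Proof.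
  move=> Hd He Hp Hpriv Heps Ht.
  set b := exp (2 * eps) - 1. set c := b * sqrt (t / INR d).
  set E := exp eps.
  have HE : 1 < E by have := exp_ineq1 eps; rewrite /E; lra.
  have HbE : exp (2 * eps) = E * E by rewrite /E -exp_plus; congr exp; ring.
  have Hb : 0 < b by rewrite /b HbE; nra.
  have HdR : INR d = 2 * INR D by rewrite Hd plus_INR; ring.
  have Hc : 0 <= c by apply: Rmult_le_pos; [lra|apply: sqrt_pos].
  have Htot0 : 0 <= tot p by apply: rsum_ge0.
  have H2D : 0 < 2 ^ D by apply: pow_lt; lra.
  have Hexp : 0 < exp (- t) by apply: exp_pos.
  case: (Req_dec (tot p) 0) => Htot.
  { have -> : #|[set s | badb c p (phi e s)]| = 0%nat.
    { apply/eqP; rewrite cards_eq0; apply/eqP/setP => s; rewrite !inE.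
      apply/RltbP => H. have := tot_split _ p (phi e s).
      have h1 := rsum_nonneg_eq0 _ (phi e s) _ Hp Htot.
      have h2 := rsum_nonneg_eq0 _ (~: phi e s) _ Hp Htot.
      rewrite /Zof h1 h2 Htot Rmult_0_r Rminus_0_r Rabs_R0 in H. lra. }
    simpl. nra. }
  have Htotp : 0 < tot p by lra.
  have HD : (0 < D)%nat.
  { case: (posnP D) => [HD0|//]. exfalso. subst D. rewrite add0n in Hd. subst d.
    move: Htotp. rewrite /tot big_ord0. lra. }
  have HDr : 0 < INR D by apply: lt_0_INR; apply/ltP.
  set M := tot p / INR d.
  have HM : 0 < M by apply: Rdiv_lt_0_compat; lra.
  have Hup : forall x, p x <= E * M.
  { move=> x. rewrite /M /Rdiv. apply: (Rmult_le_reg_l (INR d)); [lra|].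
    have -> : INR d * (E * (tot p * / INR d)) = E * tot p by field; lra.
    rewrite -rsum_const_ord /tot rsum_scale. apply: rsum_le => x' _. exact: Hpriv. }
  have Hlo : forall x, M <= E * p x.
  { move=> x. rewrite /M /Rdiv. apply: (Rmult_le_reg_l (INR d)); [lra|].
    have -> : INR d * (tot p * / INR d) = tot p by field; lra.
    rewrite -rsum_const_ord /tot. apply: rsum_le => x' _. exact: Hpriv. }
  have Hdiff : forall u v, p u - p v <= b * M.
  { move=> u v. have h1 := Hup u. have h2 := Hlo v. rewrite /b HbE.
    apply: (Rmult_le_reg_l E); [lra|].
    have : 0 <= M * ((E - 1) * (E - 1) * (E + 1)) by apply: Rmult_le_pos; [lra|]; apply: Rmult_le_pos; nra.
    nra. }
  set a := fun i : 'I_D => p (e (i, true)) - p (e (i, false)).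
  set A := b * M.
  have HA : 0 < A by apply: Rmult_lt_0_compat.
  have Ha : forall i, Rabs (a i) <= A.
  { move=> i. apply: Rabs_le. have := Hdiff (e (i, true)) (e (i, false)).
    have := Hdiff (e (i, false)) (e (i, true)). rewrite /a /A. lra. }
  have Ha' : forall i, Rabs (- a i) <= A by move=> i; rewrite Rabs_Ropp.
  set T := c * tot p.
  have HT : 0 <= T by apply: Rmult_le_pos.
  have Hsub : [set s | badb c p (phi e s)] \subset
     [set s : {ffun 'I_D -> bool} | Rltb T (\rsum_(i : 'I_D) (if s i then a i else - a i))] :|:
     [set s : {ffun 'I_D -> bool} | Rltb T (\rsum_(i : 'I_D) (if s i then - a i else - - a i))].
  { apply/subsetP => s; rewrite !inE => /RltbP H.
    rewrite (@Zphi D d e s p He Hd) in H. case: (abs_gt_cases _ _ H) => h.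
    - by apply/orP; left; apply/RltbP.
    - apply/orP; right; apply/RltbP. rewrite rsum_opp in h.
      apply: (Rlt_le_trans _ _ _ h); right; apply: eq_bigr => i _; by case: (s i). }
  have C1 := chernoff1 _ a _ _ HA Ha HT HD.
  have C2 := chernoff1 _ (fun i => - a i) _ _ HA Ha' HT HD.
  have Hex : T * T / (2 * INR D * (A * A)) = t.
  { rewrite /T /c /A /M. 
    have hs : sqrt (t / INR d) * sqrt (t / INR d) = t / INR d.
    { apply: sqrt_sqrt. apply: Rmult_le_pos; [lra|]. apply: Rlt_le; apply: Rinv_0_lt_compat; lra. }
    have -> : b * sqrt (t / INR d) * tot p * (b * sqrt (t / INR d) * tot p)
       = b * b * tot p * tot p * (sqrt (t / INR d) * sqrt (t / INR d)) by ring.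
    rewrite hs HdR. field. split; [lra|]. split; lra. }
  rewrite Hex in C1 C2.
  apply: Rle_trans. apply: le_INR. apply/leP. apply: (leq_trans (subset_leq_card Hsub)).
  exact: (leq_card_setU _ _).1.
  rewrite plus_INR. lra.
Qed.
Lemma exists_tau (T : finType) (H H' : {set T}) : #|H| = #|H'| ->
  exists tau : T -> T, injective tau /\ tau @: H = H'.
Proof.
  move=> Hc.
  set sH := enum H ++ enum (~: H). set sH' := enum H' ++ enum (~: H').
  have Hsz : size sH = #|T| by rewrite size_cat -!cardE cardsC.
  have Hsz' : size sH' = #|T| by rewrite size_cat -!cardE cardsC.
  have Hmem : forall x, x \in sH.
  { move=> x; rewrite mem_cat !mem_enum inE; by case: (x \in H). }
  have Hu : uniq sH.
  { rewrite cat_uniq !enum_uniq /= andbT. apply/hasPn => x; rewrite !mem_enum inE => hx.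
    by rewrite hx. }
  have Hu' : uniq sH'.
  { rewrite cat_uniq !enum_uniq /= andbT. apply/hasPn => x; rewrite !mem_enum inE => hx.
    by rewrite hx. }
  have Hidx : forall x, (index x sH < size sH')%nat by move=> x; rewrite Hsz' -Hsz index_mem.
  exists (fun x => nth x sH' (index x sH)). split.
  - move=> x y /eqP hxy.
    rewrite (set_nth_default x y (Hidx y)) nth_uniq // in hxy.
    by rewrite -(nth_index x (Hmem x)) (eqP hxy) nth_index.
  - apply/eqP; rewrite eqEcard card_imset; last first.
    { move=> x y /eqP hxy.
      rewrite (set_nth_default x y (Hidx y)) nth_uniq // in hxy.
      by rewrite -(nth_index x (Hmem x)) (eqP hxy) nth_index. }
    rewrite Hc leqnn andbT. apply/subsetP => z /imsetP [x hx ->].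
    have hi : (index x sH < size (enum H'))%nat.
    { by rewrite /sH index_cat mem_enum hx -cardE -Hc cardE index_mem mem_enum. }
    rewrite /sH' nth_cat hi.
    rewrite -(mem_enum (mem H')). apply: mem_nth. exact: hi.
Qed.

Definition Ffam (D d : nat) := [set e : {ffun 'I_D * bool -> 'I_d} | injectiveb e].
Definition fib (D d : nat) (H : {set 'I_d}) :=
  [set es : {ffun 'I_D * bool -> 'I_d} * {ffun 'I_D -> bool} | (es.1 \in Ffam D d) && (phi es.1 es.2 == H)].

Arguments fib D {d}.

Lemma fib_le D d (H H' : {set 'I_d}) : #|H| = #|H'| -> (#|fib D H| <= #|fib D H'|)%nat.
Proof.
  move=> Hc. have [tau [Ht Himg]] := exists_tau _ _ _ Hc.
  pose f := fun es : {ffun 'I_D * bool -> 'I_d} * {ffun 'I_D -> bool} =>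
     ([ffun u => tau (es.1 u)], es.2).
  have finj : injective f.
  { move=> [e1 s1] [e2 s2] [h1 ->]. congr (_, _). apply/ffunP => u.
    apply: Ht. by rewrite -(ffunE (fun u => tau (e1 u))) h1 ffunE. }
  rewrite -(card_imset _ finj). apply: subset_leq_card.
  apply/subsetP => z /imsetP [[e s] hes ->]. move: hes; rewrite !inE /= => /andP [/injectiveP he /eqP hphi].
  apply/andP; split.
  - apply/injectiveP => u v; rewrite !ffunE => /Ht. exact: he.
  - apply/eqP. rewrite -Himg -hphi /phi -imset_comp. apply: eq_imset => i /=. by rewrite ffunE.
Qed.

Lemma fib_eq D d (H H' : {set 'I_d}) : #|H| = #|H'| -> #|fib D H| = #|fib D H'|.
Proof. move=> Hc; apply/eqP; rewrite eqn_leq !fib_le //. Qed.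

Lemma card_phi D d (e : {ffun 'I_D * bool -> 'I_d}) s : injective e -> #|phi e s| = D.
Proof.
  move=> He. rewrite /phi card_imset ?cardsT ?card_ord //.
  by move=> i j /He [].
Qed.

Lemma dcount D d (B : pred {set 'I_d}) :
  #|[set es : {ffun 'I_D * bool -> 'I_d} * {ffun 'I_D -> bool} | (es.1 \in Ffam D d) && B (phi es.1 es.2)]|
  = (\sum_(H : {set 'I_d} | (#|H| == D) && B H) #|fib D H|)%nat.
Proof.
  rewrite -sum1_card (partition_big (fun es => phi es.1 es.2) (fun H => (#|H| == D) && B H)).
  - apply: eq_bigr => H /andP [_ hB]. rewrite -sum1_card. apply: eq_bigl => es.
    rewrite !inE; case: (phi es.1 es.2 =P H) => [->|] /=; rewrite ?hB ?andbT ?andbF //.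
  - move=> [e s]; rewrite inE /= => /andP [he hB]. rewrite hB andbT card_phi //.
    move: he; rewrite inE => /injectiveP; done.
Qed.

Lemma pcount D d (B : pred {set 'I_d}) :
  #|[set es : {ffun 'I_D * bool -> 'I_d} * {ffun 'I_D -> bool} | (es.1 \in Ffam D d) && B (phi es.1 es.2)]|
  = (\sum_(e in Ffam D d) #|[set s : {ffun 'I_D -> bool} | B (phi e s)]|)%nat.
Proof.
  rewrite -sum1_card. 
  rewrite (eq_bigr (fun e => \sum_(s in [set s : {ffun 'I_D -> bool} | B (phi e s)]) 1)%nat);
    last by move=> e _; rewrite sum1_card.
  rewrite pair_big_dep. apply: eq_bigl => [[e s]]; rewrite !inE //.
Qed.

Lemma INR_muln a b : INR (a * b)%nat = INR a * INR b.
Proof. by rewrite -multE mult_INR. Qed.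

Lemma INR_expn2 D : INR (2 ^ D)%nat = 2 ^ D.
Proof.
  elim: D => [|D IH]; first by [].
  rewrite -[(2 ^ D.+1)%nat]/(2 * 2 ^ D)%nat.
  rewrite INR_muln IH /=. ring.
Qed.

Lemma rsum_constT (T : finType) (c : R) : \rsum_(i : T) c = INR #|T| * c.
Proof.
  rewrite big_const. elim: #|_| => [|m IH]; first by simpl; ring.
  rewrite S_INR -[iter m.+1 _ _]/(c + iter m (Rplus c) 0) IH; ring.
Qed.

Lemma single_le (T : finType) (F : T -> R) (i0 : T) : (forall i, 0 <= F i) -> F i0 <= \rsum_(i : T) F i.
Proof.
  move=> H. rewrite (bigD1 i0) //=. have : 0 <= \big[Rplus/0]_(i | i != i0) F i by apply: rsum_ge0.
  lra.
Qed.

Lemma union_count (T I J : finType) (A : {set T}) (B : I -> J -> {set T}) :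
  (forall s, s \in A -> exists i j, s \in B i j) ->
  INR #|A| <= \rsum_(i : I) \rsum_(j : J) INR #|B i j|.
Proof.
  move=> H.
  have E : forall i j, INR #|B i j| = \rsum_(s : T) (if s \in B i j then 1 else 0).
  { move=> i j; by rewrite INR_card big_mkcond. }
  under eq_bigr => i _ do under eq_bigr => j _ do rewrite E.
  rewrite INR_card big_mkcond.
  under [X in _ <= X]eq_bigr => i _ do rewrite exchange_big /=.
  rewrite [X in _ <= X]exchange_big /=.
  apply: rsum_le => s _.
  case hs : (s \in A); last first.
  { apply: rsum_ge0 => i _; apply: rsum_ge0 => j _; case: (s \in B i j); lra. }
  have [i [j hij]] := H s hs.
  apply: Rle_trans; last first. apply: (single_le _ _ i) => i'; apply: rsum_ge0 => j' _; case: (s \in B i' j'); lra.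
  apply: Rle_trans; last first. apply: (single_le _ _ j) => j'; case: (s \in B i j'); lra.
  rewrite hij; lra.
Qed.

Lemma priv_point (d : nat) (Y : finType) (rz : randomizer 'I_d Y) eps y :
  is_private eps rz -> forall x x', rz x y <= exp eps * rz x' y.
Proof.
  move=> H x x'. have := H x x' [set y]. by rewrite /prob !big_set1.
Qed.

Lemma bad_e_bound D d (e : {ffun 'I_D * bool -> 'I_d}) (n k : nat) (Y : finType)
  (Rs : 'I_n -> randomizer 'I_d Y) eps :
  d = (D + D)%nat -> injective e -> 0 < eps -> (forall i, is_randomizer (Rs i)) ->
  (forall i, is_private eps (Rs i)) -> num_distinct Rs k ->
  (3 * #|[set s : {ffun 'I_D -> bool} | [exists i : 'I_n, exists y : Y,
      badb ((exp (2 * eps) - 1) * sqrt (ln (12 * INR #|Y| * INR k) / INR d)) (fun x => Rs i x y) (phi e s)]]|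
   <= 2 ^ D)%nat.
Proof.
  move=> Hd He Heps Hrz Hpriv [g [Hsurj Hiff]].
  set L := ln (12 * INR #|Y| * INR k).
  set c := (exp (2 * eps) - 1) * sqrt (L / INR d).
  set A := [set s : {ffun 'I_D -> bool} | _].
  case: (posnP #|A|) => [->|HA]; first by rewrite muln0.
  have [s0 hs0] : exists s0, s0 \in A by apply/set0Pn; rewrite -card_gt0.
  move: (hs0); rewrite inE => /existsP [i0 /existsP [y0 _]].
  have Hk : (0 < k)%nat by case: (g i0) => j hj; apply: leq_ltn_trans hj.
  have HY : (0 < #|Y|)%nat by apply/card_gt0P; exists y0.
  pose rep := fun j : 'I_k => odflt i0 [pick i | g i == j].
  have Hrep : forall j, g (rep j) = j.
  { move=> j. rewrite /rep. case: pickP => [i /eqP //|H0].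
    have [i hi] := Hsurj j. by move: (H0 i); rewrite hi eqxx. }
  have HRs : forall i, Rs (rep (g i)) = Rs i by move=> i; apply/Hiff; rewrite Hrep.
  set B := fun (j : 'I_k) (y : Y) => [set s : {ffun 'I_D -> bool} | badb c (fun x => Rs (rep j) x y) (phi e s)].
  have U : INR #|A| <= \rsum_(j : 'I_k) \rsum_(y : Y) INR #|B j y|.
  { apply: union_count => s; rewrite inE => /existsP [i /existsP [y hb]].
    exists (g i), y. by rewrite inE HRs. }
  have HkR : 0 < INR k by apply: lt_0_INR; apply/ltP.
  have HYR : 0 < INR #|Y| by apply: lt_0_INR; apply/ltP.
  have HK : 1 <= INR #|Y| * INR k.
  { have : 1 <= INR k by apply: (le_INR 1); apply/leP.
    have : 1 <= INR #|Y| by apply: (le_INR 1); apply/leP. nra. }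
  have HL : 0 <= L.
  { rewrite /L -ln_1. case: (Req_dec (12 * INR #|Y| * INR k) 1) => h; first by rewrite h; lra.
    apply: Rlt_le; apply: ln_increasing; lra. }
  have Bb : forall j y, INR #|B j y| <= 2 * 2 ^ D * exp (- L).
  { move=> j y. apply: count_bad_p => //.
    - move=> x; exact: ((Hrz (rep j)).1 x y).
    - move=> x x'; exact: priv_point. }
  have Hexp : exp (- L) = / (12 * INR #|Y| * INR k).
  { rewrite exp_Ropp /L exp_ln //. nra. }
  have S : \rsum_(j : 'I_k) \rsum_(y : Y) INR #|B j y| <= INR k * (INR #|Y| * (2 * 2 ^ D * exp (- L))).
  { apply: (Rle_trans _ (\rsum_(j : 'I_k) \rsum_(y : Y) (2 * 2 ^ D * exp (- L)))).
    - apply: rsum_le => j _; apply: rsum_le => y _; exact: Bb.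
    - right. rewrite rsum_constT rsum_constT card_ord. done. }
  have H2D : 0 < 2 ^ D by apply: pow_lt; lra.
  have Fin : INR (3 * #|A|)%nat <= INR (2 ^ D)%nat.
  { rewrite INR_muln INR_expn2. rewrite Hexp in S.
    have h12 : 0 < 12 * INR #|Y| * INR k.
    { apply: Rmult_lt_0_compat; [apply: Rmult_lt_0_compat|]; lra. }
    have HH : INR k * (INR #|Y| * (2 * 2 ^ D * / (12 * INR #|Y| * INR k))) = 2 ^ D / 6.
    { field. split; lra. }
    rewrite HH in S. rewrite (_ : INR 3 = 3); last by simpl; ring. lra. }
  apply/leP. exact: INR_le.
Qed.

Lemma ratio_bound a b c : 0 <= a -> 0 <= b -> 0 <= c -> c < 1/2 -> Rabs (a - b) <= c * (a + b) ->
  a <= exp (4 * c) * b.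
Proof.
  move=> Ha Hb Hc Hc2 H.
  have h1 : a - b <= c * (a + b) by apply: Rle_trans; [apply: Rle_abs|exact H].
  have h2 := exp_ineq1_le (4 * c).
  have h3 : (1 + c) <= exp (4 * c) * (1 - c) by nra.
  apply: (Rmult_le_reg_r (1 - c)); [lra|].
  have : a * (1 - c) <= b * (1 + c) by nra.
  nra.
Qed.

Lemma good_Q (d D : nat) (Y : finType) (rz : randomizer 'I_d Y) (H : {set 'I_d}) c eps' :
  d = (D + D)%nat -> #|H| = D -> is_randomizer rz -> 0 <= c -> c < 1/2 -> eps' = 4 * c ->
  (forall y, ~~ badb c (fun x => rz x y) H) -> is_private eps' (Q H rz).
Proof.
  move=> Hd HH [Hnn _] Hc Hc2 He' Hgood.
  have HC : #|~: H| = D.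
  { have := cardsC H. rewrite card_ord HH => h. apply: (@addnI D). by rewrite h. }
  have Hpt : forall y, (\rsum_(x in H) rz x y) <= exp eps' * (\rsum_(x in ~: H) rz x y) /\
                       (\rsum_(x in ~: H) rz x y) <= exp eps' * (\rsum_(x in H) rz x y).
  { move=> y. have := Hgood y. rewrite /badb => /RltbP hnb.
    have hnb' : Rabs (Zof (fun x => rz x y) H) <= c * tot (fun x => rz x y) by lra.
    rewrite (tot_split _ _ H) /Zof in hnb'.
    have s1 : 0 <= \rsum_(x in H) rz x y by apply: rsum_ge0.
    have s2 : 0 <= \rsum_(x in ~: H) rz x y by apply: rsum_ge0.
    rewrite He'. split; apply: ratio_bound => //.
    rewrite -Rabs_Ropp. rewrite Rplus_comm in hnb'. by rewrite Ropp_minus_distr. }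
  have He1 : 1 <= exp eps' by have := exp_ineq1_le eps'; lra.
  have Hq : forall b b' y, Q H rz b y <= exp eps' * Q H rz b' y.
  { move=> b b' y. rewrite /Q /unif_out HC.
    have hD : 0 <= / INR D.
    { case: (posnP D) => [->|hD]; first by rewrite /= Rinv_0; lra.
      apply: Rlt_le; apply: Rinv_0_lt_compat; apply: lt_0_INR; apply/ltP. done. }
    have s1 : 0 <= \rsum_(x in H) rz x y by apply: rsum_ge0.
    have s2 : 0 <= \rsum_(x in ~: H) rz x y by apply: rsum_ge0.
    have [p1 p2] := Hpt y.
    have E : forall A : {set 'I_d}, \rsum_(x in A) (rz x y / INR D) = / INR D * (\rsum_(x in A) rz x y).
    { move=> A; rewrite rsum_scale; apply: eq_bigr => x _; rewrite /Rdiv Rmult_comm //. }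
    rewrite HH.
    case: b; case: b'; rewrite /= !E -Rmult_assoc (Rmult_comm (exp eps')) Rmult_assoc;
      apply: Rmult_le_compat_l => //; nra. }
  move=> b b' S. rewrite /prob rsum_scale. apply: rsum_le => y _. exact: Hq.
Qed.

Lemma expn_pow m n : expn m n = Nat.pow m n.
Proof. elim: n => [|n IH] //. by rewrite expnS IH. Qed.

Close Scope R_scope.

Theorem mainTheorem6 (eps : R) (d n : nat) (Y : finType)
  (Rs : 'I_n -> randomizer 'I_d Y) (k : nat) :
  (0 < eps)%R ->
  (forall i, is_randomizer (Rs i)) ->
  (forall i, is_private eps (Rs i)) ->
  ~~ odd d ->
  num_distinct Rs k ->
  (INR d > 4 * (exp (2 * eps) - 1) ^ 2 * ln (12 * INR #|Y| * INR k))%R ->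
  let eps' := ((exp (2 * eps) - 1) * sqrt (16 / INR d * ln (12 * INR #|Y| * INR k)))%R in
  (* Pr_H[ all Q_{H,R_i} are eps'-private ] >= 2/3, H uniform among d/2-subsets of [d]:
     there is a set G of such H, all good, with #|G| / #|{H : |H| = d/2}| >= 2/3. *)
  exists G : {set {set 'I_d}},
    G \subset [set H : {set 'I_d} | #|H| == d./2] /\
    (forall H, H \in G -> forall i, is_private eps' (Q H (Rs i))) /\
    (2 * #|[set H : {set 'I_d} | #|H| == d./2]| <= 3 * #|G|)%N.
Proof.
  move=> Heps Hrz Hpriv Hodd Hnd Hdgt eps'.
  set D := d./2.
  have Hd : d = (D + D)%nat.
  { have := odd_double_half d. rewrite (negbTE Hodd) add0n -addnn. by move=> ->. }
  set L := ln (12 * INR #|Y| * INR k).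
  set b := (exp (2 * eps) - 1)%R.
  set c := (b * sqrt (L / INR d))%R.
  have Hb : (0 < b)%R.
  { rewrite /b. have := exp_ineq1 (2 * eps). move=> h; have := h ltac:(lra). lra. }
  have Hc0 : (0 <= c)%R by apply: Rmult_le_pos; [lra|apply: sqrt_pos].
  have He' : eps' = (4 * c)%R.
  { rewrite /eps' /c /L. 
    have -> : (16 / INR d * ln (12 * INR #|Y| * INR k) = 16 * (ln (12 * INR #|Y| * INR k) / INR d))%R
      by rewrite /Rdiv; ring.
    rewrite sqrt_mult_alt; last lra.
    have -> : sqrt 16 = 4%R.
    { replace 16%R with (4 * 4)%R by ring. apply: sqrt_square; lra. }
    rewrite /b; ring. }
  have Hc2 : (c < 1/2)%R.
  { case: (Rle_dec (L / INR d) 0) => h.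
    - rewrite /c sqrt_neg_0 //. lra.
    - have hd : (0 < INR d)%R.
      { case: (Req_dec (INR d) 0) => h0; last by have := pos_INR d; lra.
        exfalso. apply: h. rewrite h0 /Rdiv Rinv_0. lra. }
      have hs : (sqrt (L / INR d) * sqrt (L / INR d) = L / INR d)%R by apply: sqrt_sqrt; lra.
      have hcc : (c * c = b * b * (L / INR d))%R.
      { rewrite -hs /c. ring. }
      have hlt : (b * b * (L / INR d) < 1 / 4)%R.
      { have : (INR d > 4 * (b * b) * L)%R by move: Hdgt; rewrite /b /L; simpl; rewrite Rmult_1_r.
        move=> h4. apply: (Rmult_lt_reg_r (INR d)) => //.
        have -> : (b * b * (L / INR d) * INR d = b * b * L)%R by field; lra.
        lra. }
      nra. }
  pose badH := fun H : {set 'I_d} => [exists i : 'I_n, exists y : Y, badb c (fun x => Rs i x y) H].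
  exists [set H : {set 'I_d} | (#|H| == D) && ~~ badH H].
  split; [|split].
  - apply/subsetP => H; rewrite !inE => /andP [-> _] //.
  - move=> H; rewrite inE => /andP [/eqP hH hb] i.
    apply: (@good_Q d D Y (Rs i) H c eps' Hd hH (Hrz i) Hc0 Hc2 He').
    move=> y; apply/negP => hy. move/negP: hb; apply. apply/existsP; exists i; apply/existsP; exists y; exact: hy.
  - set Ds := [set H : {set 'I_d} | #|H| == D].
    set G := [set H : {set 'I_d} | (#|H| == D) && ~~ badH H].
    set Bad := [set H : {set 'I_d} | (#|H| == D) && badH H].
    have Hsplit : #|Ds| = addn #|Bad| #|G|.
    { have E1 : Ds :&: [set H : {set 'I_d} | badH H] = Bad by apply/setP => H; rewrite !inE.
      have E2 : Ds :\: [set H : {set 'I_d} | badH H] = G by apply/setP => H; rewrite !inE andbC.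
      by rewrite -(cardsID [set H : {set 'I_d} | badH H] Ds) E1 E2. }
    suff H3 : leq (muln 3 #|Bad|) #|Ds|.
    { rewrite Hsplit in H3 *. move: H3. move: #|Bad| #|G| => x y /leP h. apply/leP.
      rewrite -!multE -!plusE in h *. lia. }
    have hc : #|{: 'I_D * bool}| = d by rewrite card_prod card_ord card_bool muln2 Hd addnn.
    pose e0 : {ffun 'I_D * bool -> 'I_d} := [ffun u => cast_ord hc (enum_rank u)].
    have He0 : e0 \in Ffam D d.
    { rewrite inE; apply/injectiveP => u v; rewrite !ffunE => /cast_ord_inj /enum_rank_inj. done. }
    pose s0 : {ffun 'I_D -> bool} := [ffun _ => true].
    have He0i : injective e0 by move: He0; rewrite inE => /injectiveP.
    set c0 := #|fib D (phi e0 s0)|.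
    have Hfib : forall H : {set 'I_d}, #|H| == D -> #|fib D H| = c0.
    { move=> H /eqP h; apply: fib_eq; by rewrite h card_phi. }
    have Pbad := dcount D d badH. have Pall := dcount D d (fun _ => true).
    rewrite (_ : (\sum_(H : {set 'I_d} | (#|H| == D) && badH H) #|fib D H| = muln #|Bad| c0)%nat) in Pbad;
      last first.
    { rewrite -sum_nat_const. apply: eq_big => H; [by rewrite inE| move=> /andP [h _]; exact: Hfib]. }
    rewrite (_ : (\sum_(H : {set 'I_d} | (#|H| == D) && true) #|fib D H| = muln #|Ds| c0)%nat) in Pall;
      last first.
    { rewrite -sum_nat_const. apply: eq_big => H; [by rewrite inE andbT| move=> /andP [h _]; exact: Hfib]. }
    rewrite (pcount D d badH) in Pbad. rewrite (pcount D d (fun _ => true)) in Pall.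
    have Eall : (\sum_(e in Ffam D d) #|[set s : {ffun 'I_D -> bool} | (fun _ => true) (phi e s)]|
                = muln #|Ffam D d| (Nat.pow 2 D))%nat.
    { rewrite -sum_nat_const. apply: eq_bigr => e _.
      rewrite (_ : [set s : {ffun 'I_D -> bool} | _] = setT); last by apply/setP => s; rewrite !inE.
      by rewrite cardsT card_ffun card_bool card_ord expn_pow. }
    have Ebad : leq (muln 3 (\sum_(e in Ffam D d) #|[set s : {ffun 'I_D -> bool} | badH (phi e s)]|))
                (muln #|Ffam D d| (Nat.pow 2 D)).
    { rewrite big_distrr /= -sum_nat_const. apply: leq_sum => e.
      rewrite inE => /injectiveP he. exact: (@bad_e_bound D d e n k Y Rs eps Hd he Heps Hrz Hpriv Hnd). }
    rewrite Pbad in Ebad. rewrite -Eall Pall in Ebad.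
    have Hcz : (0 < c0)%nat.
    { rewrite lt0n; apply/eqP => h0.
      have h1 : muln #|Ffam D d| (Nat.pow 2 D) = 0%nat by rewrite -Eall Pall h0 muln0.
      move: h1 => /eqP; rewrite muln_eq0 -expn_pow expn_eq0 orbF cards_eq0 => /eqP hF.
      by move: He0; rewrite hF inE. }
    by rewrite -(leq_pmul2r Hcz) -mulnA.
Qed.
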